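(* Let $n\ge 1$ be an integer and $0<p_{\mathrm{tot}}\le 1$. Let $\mathcal X$ be the family of random variables $$\mathcal X=\Big\{\max\big(\{X_i\}_{i=1}^n\big)\ \Big|\ X_i\sim\mathrm{geom}(p_i)\text{ independent},\ 0<p_i\le 1,\ \prod_{i=1}^n p_i=p_{\mathrm{tot}}\Big\}.$$ Let $X_{\mathrm{hom}}\in\mathcal X$ be the member with $p_1=\dots=p_n$, i.e. $X_{\mathrm{hom}}=\max(\{X_{\mathrm{hom},i}\}_{i=1}^n)$ with the $X_{\mathrm{hom},i}$ independent and $X_{\mathrm{hom},i}\sim\mathrm{geom}(\sqrt[n]{p_{\mathrm{tot}}})$. Then for every $X\in\mathcal X$ we have $X\ge_{\mathrm{st}}X_{\mathrm{hom}}$.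
   Context: $\mathrm{geom}(p)$ denotes the geometric distribution on $\{1,2,3,\dots\}$ with success probability $p$: $\Pr(X=k)=(1-p)^{k-1}p$, so $\Pr(X\le k)=1-(1-p)^k$. For random variables $X,Y$, $X\ge_{\mathrm{st}}Y$ ($X$ stochastically dominates $Y$) means $\Pr(X>z)\ge\Pr(Y>z)$ for all real $z$. *)

(* Defs.v *)
From HB Require Import structures.
From mathcomp Require Import all_boot all_order all_algebra.
From mathcomp Require Import all_classical all_reals all_analysis.
Set Implicit Arguments. Unset Strict Implicit. Unset Printing Implicit Defensive.
Import Order.TTheory GRing.Theory Num.Theory.
Local Open Scope classical_set_scope.
Local Open Scope ring_scope.

Definition is_geom {R : realType} {d : measure_display} {T : measurableType d}
  (P : probability T R) (X : {RV P >-> R}) (p : R) : Prop :=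
  forall k : nat, P (X @^-1` [set (k.+1)%:R]) = ((1 - p) ^+ k * p)%:E.

Definition mutually_independent {R : realType} {d : measure_display}
  {T : measurableType d} (P : probability T R) (n : nat)
  (X : 'I_n -> {RV P >-> R}) : Prop :=
  forall B : 'I_n -> set R, (forall i, measurable (B i)) ->
    P (\bigcap_(i in [set: 'I_n]) (X i @^-1` B i))
    = (\prod_(i < n) P (X i @^-1` B i))%E.

(* Pointwise maximum of the family (seed 0; the variables are a.s. >= 1). *)
Definition max_rv {R : realType} {T : Type} (n : nat) (X : 'I_n -> T -> R)
  (w : T) : R := \big[Num.max/0]_(i < n) X i w.

(* Main.v *)
Require Import Defs.
From HB Require Import structures.
From mathcomp Require Import all_boot all_order all_algebra.
From mathcomp Require Import all_classical all_reals all_analysis.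
From mathcomp Require Import ring lra.
Import Order.TTheory GRing.Theory Num.Theory.
Import numFieldNormedType.Exports.
Local Open Scope classical_set_scope.
Local Open Scope ring_scope.

Section Analytic.
Variable R : realType.
Definition Fm (m : nat) (t : R) := 1 - (1 - t) ^+ m.
Definition Sm (m : nat) (y : R) := \sum_(k < m) y ^+ k.

Lemma FmE m t : Fm m t = t * Sm m (1 - t).
Proof.
rewrite /Fm /Sm.
have := subrX1 (1 - t) m.
rewrite (_ : 1 - t - 1 = - t); last by rewrite addrAC subrr sub0r.
move=> h; apply: oppr_inj; by rewrite opprB h mulNr.
Qed.

Lemma Fm_gt0 m t : (0 < m)%N -> 0 < t <= 1 -> 0 < Fm m t.
Proof.
move=> hm /andP[t0 t1]; rewrite /Fm subr_gt0 exprn_ilt1 ?subr_ge0 //.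
  by rewrite -lt0n.
by rewrite ltrBlDl ltrDr.
Qed.

Lemma r_mono m s t : 0 < s -> s <= t -> t <= 1 ->
  t * (1 - t) ^+ m.-1 * Fm m s <= s * (1 - s) ^+ m.-1 * Fm m t.
Proof.
move=> s0 st t1.
rewrite !FmE.
set A := (1 - t) ^+ m.-1; set B := Sm m (1 - s); set C := (1 - s) ^+ m.-1; set D := Sm m (1 - t).
rewrite (_ : t * A * (s * B) = (s * t) * (A * B)); last by ring.
rewrite (_ : s * C * (t * D) = (s * t) * (C * D)); last by ring.
rewrite {}/A {}/B {}/C {}/D.
have ts : 0 <= s * t by rewrite mulr_ge0 // ltW // (lt_le_trans s0 st).
apply: ler_wpM2l => //.
rewrite /Sm !mulr_sumr; apply: ler_sum => k _.
set a := 1 - t; set b := 1 - s.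
have a0 : 0 <= a by rewrite subr_ge0.
have ab : a <= b by rewrite lerB.
have b0 : 0 <= b by apply: le_trans ab.
have hk : m.-1 = (m.-1 - k + k)%N.
  by rewrite subnK // -ltnS; case: m k => [|m] [k hk] //=.
rewrite hk !exprD -!mulrA (mulrC (b ^+ k)).
apply: ler_wpM2r; first by rewrite mulr_ge0 // exprn_ge0.
by apply: lerXn2r => //; rewrite nnegrE.
Qed.

Lemma chain (f g : R -> R) (x df dg : R) : is_derive x 1 f df -> is_derive (f x) 1 g dg ->
  is_derive x 1 (g \o f) (dg * df).
Proof.
move=> hf hg.
apply: DeriveDef.
  apply/derivable1_diffP; apply: differentiable_comp; apply/derivable1_diffP.
  exact: ex_derive. exact: ex_derive.
rewrite -derive1E derive1_comp; [|exact: ex_derive|exact: ex_derive].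
by rewrite !derive1E !derive_val.
Qed.
Arguments chain {f g x df dg}.

Lemma dF (m : nat) (t : R) : is_derive t 1 (Fm m) (m%:R * (1-t)^+m.-1).
Proof.
have h1 : is_derive t 1 (fun t : R => 1 - t) (-1).
  have := is_deriveB (is_derive_cst (1:R) t 1) (is_derive_id t (1:R)).
  by rewrite sub0r.
have h2 := @is_deriveX R R (fun t : R => 1 - t) m t 1 (-1) h1.
have h3 := is_deriveB (is_derive_cst (1:R) t 1) h2.
rewrite exprfctE in h3.
apply: (is_derive_eq h3).
by rewrite sub0r /GRing.scale /= mulrN1 opprK.
Qed.

Lemma dphi m (c t : R) : (0 < m)%N -> 0 < t <= 1 ->
  is_derive t 1 (fun x => ln (Fm m x) - c * ln x)
    ((Fm m t)^-1 * (m%:R * (1-t)^+m.-1) - c * t^-1).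
Proof.
move=> hm ht.
have Ft := @Fm_gt0 m t hm ht.
have h1 := chain (dF m t) (is_derive1_ln Ft).
have t0 : 0 < t by case/andP: ht.
have h2 := is_deriveZ c (is_derive1_ln t0).
exact: (is_deriveB h1 h2).
Qed.

Lemma dphi_sign m (q t : R) : (0 < m)%N -> 0 < q <= 1 -> 0 < t <= 1 ->
  let c := m%:R * (q * (1 - q) ^+ m.-1 / Fm m q) in
  let d := (Fm m t)^-1 * (m%:R * (1-t)^+m.-1) - c * t^-1 in
  (t <= q -> 0 <= d) /\ (q <= t -> d <= 0).
Proof.
move=> hm hq ht c d.
have Ft := @Fm_gt0 m t hm ht.
have Fq := @Fm_gt0 m q hm hq.
have t0 : 0 < t by case/andP: ht.
have q0 : 0 < q by case/andP: hq.
have dE : d = m%:R / t * (t * (1 - t) ^+ m.-1 / Fm m t - q * (1 - q) ^+ m.-1 / Fm m q).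
  rewrite /d /c; field; by rewrite ?gt_eqF.
have m0 : 0 < m%:R / t :> R by rewrite divr_gt0 // ltr0n.
rewrite dE; split => h.
  apply: mulr_ge0; first exact: ltW.
  rewrite subr_ge0.
  rewrite ler_pdivrMr // mulrAC ler_pdivlMr //.
  apply: r_mono => //; by case/andP: hq.
rewrite pmulr_rle0 // subr_le0.
rewrite ler_pdivrMr // mulrAC ler_pdivlMr //.
apply: r_mono => //; by case/andP: ht.
Qed.

Lemma tangent m (p q : R) : (0 < m)%N -> 0 < p <= 1 -> 0 < q <= 1 ->
  ln (Fm m p) <= ln (Fm m q) + m%:R * (q * (1 - q) ^+ m.-1 / Fm m q) * (ln p - ln q).
Proof.
move=> hm hp hq.
set c := m%:R * (q * (1 - q) ^+ m.-1 / Fm m q).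
pose phi := fun x => ln (Fm m x) - c * ln x.
pose d := fun t => (Fm m t)^-1 * (m%:R * (1-t)^+m.-1) - c * t^-1.
suff : phi p <= phi q by rewrite /phi mulrBr; lra.
have p0 : 0 < p by case/andP: hp.
have q0 : 0 < q by case/andP: hq.
have Hd (a b : R) : 0 < a -> b <= 1 -> forall x : R, x \in `]a, b[ -> is_derive x 1 phi (d x).
  move=> a0 b1 x; rewrite in_itv /= => /andP[ax xb].
  apply: dphi => //; rewrite (lt_trans a0 ax) /=; exact: ltW (lt_le_trans xb b1).
have Hc (a b : R) : 0 < a -> b <= 1 -> {within `[a, b], continuous phi}.
  move=> a0 b1; apply/continuous_in_subspaceT => x /[!inE]; rewrite /= in_itv /= => /andP[ax xb].
  apply: differentiable_continuous; apply/derivable1_diffP.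
  have hd : is_derive x 1 phi (d x).
    apply: dphi => //; rewrite (lt_le_trans a0 ax) /=; exact: le_trans xb b1.
  by case: hd.
case: (ltgtP p q) => [pq|qp|->//].
- have [x] := MVT pq (Hd p q p0 (andP hq).2) (Hc p q p0 (andP hq).2).
  rewrite in_itv /= => /andP[px xq] e.
  rewrite -subr_ge0 e; apply: mulr_ge0; last by rewrite subr_ge0 ltW.
  have hx : 0 < x <= 1 by rewrite (lt_trans p0 px) /= (le_trans (ltW xq) (andP hq).2).
  have := @dphi_sign m q x hm hq hx; rewrite /= -/c => -[+ _]; apply; exact: ltW.
- have [x] := MVT qp (Hd q p q0 (andP hp).2) (Hc q p q0 (andP hp).2).
  rewrite in_itv /= => /andP[qx xp] e.
  rewrite -subr_le0 e; apply: mulr_le0_ge0; last by rewrite subr_ge0 ltW.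
  have hx : 0 < x <= 1 by rewrite (lt_trans q0 qx) /= (le_trans (ltW xp) (andP hp).2).
  have := @dphi_sign m q x hm hq hx; rewrite /= -/c => -[_ +]; apply; exact: ltW.
Qed.

Lemma ln_prod n (f : 'I_n -> R) : (forall i, 0 < f i) ->
  ln (\prod_(i < n) f i) = \sum_(i < n) ln (f i).
Proof.
elim: n f => [|n IH] f hf; first by rewrite !big_ord0 ln1.
rewrite !big_ord_recr /= lnM ?IH //; rewrite posrE //.
by apply: prodr_gt0 => i _.
Qed.

Lemma prod_ineq (n m : nat) (p : 'I_n -> R) (q : R) :
  (forall i, 0 < p i <= 1) -> 0 < q <= 1 -> \prod_(i < n) p i = q ^+ n ->
  \prod_(i < n) Fm m (p i) <= (Fm m q) ^+ n.
Proof.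
move=> hp hq hprod.
case: m => [|m].
  rewrite (eq_bigr (fun=> 0)); last by move=> i _; rewrite /Fm expr0 subrr.
  by rewrite prodr_const card_ord /Fm expr0 subrr.
have hm : (0 < m.+1)%N by [].
have Fp i : 0 < Fm m.+1 (p i) by apply: Fm_gt0.
have Fq : 0 < Fm m.+1 q by apply: Fm_gt0.
have q0 : 0 < q by case/andP: hq.
rewrite -ler_ln ?posrE ?exprn_gt0 //; last by apply: prodr_gt0 => i _.
rewrite ln_prod // lnXn //.
set c := m.+1%:R * (q * (1 - q) ^+ m.+1.-1 / Fm m.+1 q).
apply: (le_trans (y := \sum_(i < n) (ln (Fm m.+1 q) + c * (ln (p i) - ln q)))).
  by apply: ler_sum => i _; apply: tangent.
rewrite big_split /= -mulr_sumr sumrB.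
have : \sum_(i < n) ln (p i) = ln q *+ n.
  rewrite -ln_prod; last by move=> i; case/andP: (hp i).
  by rewrite hprod lnXn.
move=> ->; rewrite sumr_const card_ord sumr_const card_ord subrr mulr0 addr0.
by [].
Qed.
End Analytic.
Arguments Fm {R}.

Section Geom.
Variable R : realType.
Lemma small_pow (y e : R) : 0 <= y < 1 -> 0 < e -> exists L : nat, y ^+ L < e.
Proof.
move=> /andP[y0 y1] e0.
have hy : `|y| < 1 by rewrite ger0_norm.
have := @cvgr0_norm_lt _ _ _ _ _ (GRing.exp y : R^nat) (cvg_expr hy) e e0.
case => N _ HN; exists N.
have := HN N (leqnn N); rewrite /= ger0_norm //; exact: exprn_ge0.
Qed.

Fixpoint Sset (a L : nat) : set R :=
  if L is L'.+1 then Sset a L' `|` [set (a + L').+1%:R] else set0.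

Lemma SsetP a L x : Sset a L x -> exists k, (a <= k < a + L)%N /\ x = k.+1%:R.
Proof.
elim: L => [//|L IH] /= [/IH [k [hk ->]]|->].
  by exists k; split => //; case/andP: hk => -> /= h; rewrite addnS ltnS ltnW.
by exists (a + L)%N; rewrite leq_addr addnS ltnSn.
Qed.

Lemma Sset_meas a L : measurable (Sset a L).
Proof.
elim: L => [|L IH] /=; first exact: measurable0.
by apply: measurableU => //; exact: measurable_set1.
Qed.

Variables (d : measure_display) (T : measurableType d) (P : probability T R).
Variables (X : {RV P >-> R}) (p : R).
Hypothesis hp : 0 < p <= 1.
Hypothesis hX : is_geom X p.

Lemma P_Sset a L : P (X @^-1` Sset a L) = ((1 - p) ^+ a - (1 - p) ^+ (a + L))%:E.
Proof.
elim: L => [|L IH] /=.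
  by rewrite preimage_set0 measure0 addn0 subrr.
rewrite preimage_setU measureU //; first last.
- rewrite -preimage_setI.
  suff -> : Sset a L `&` [set (a + L).+1%:R] = set0 by rewrite preimage_set0.
  apply/seteqP; split => // x [/SsetP [k [hk ->]] /= /eqP].
  rewrite eqr_nat eqSS => /eqP hk'; move: hk; rewrite hk' ltnn andbF //.
- exact: measurable_funPTI (Sset_meas _ _).
rewrite -[Y in Y + _ = _]/(P (X @^-1` Sset a L)) IH.
rewrite -[Y in _ + Y = _]/(P (X @^-1` [set (a + L).+1%:R])).
rewrite hX -EFinD; congr (_%:E).
rewrite addnS exprS; ring.
Qed.

Lemma geom_cdf (z : R) :
  P (X @^-1` `]-oo, z]) = (1 - (1 - p) ^+ (Num.truncn z))%:E.
Proof.
set K := Num.truncn z.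
set A := X @^-1` `]-oo, z].
have mA : measurable A by apply: measurable_funPTI; exact: measurable_itv.
have h1 : ((1 - (1 - p) ^+ K)%:E <= P A)%E.
  have := P_Sset 0 K; rewrite expr0 add0n => <-.
  apply: le_measure; rewrite ?inE //; first exact: measurable_funPTI (Sset_meas _ _).
  move=> w /= /SsetP [k [hk hx]]; rewrite /A /preimage /= in_itv /= hx -truncn_gt_nat.
  by case/andP: hk.
have h2 L : (((1 - p) ^+ K - (1 - p) ^+ (K + L))%:E <= 1 - P A)%E.
  rewrite -probability_setC // -P_Sset.
  apply: le_measure; rewrite ?inE //; first exact: measurable_funPTI (Sset_meas _ _).
    exact: measurableC.
  move=> w /= /SsetP [k [hk hx]]; rewrite /A /preimage /= in_itv /= hx; apply/negP; rewrite -ltNge.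
  apply: (lt_le_trans (truncnS_gt z)); rewrite ler_nat ltnS.
  by case/andP: hk.
have := probability_le1 P mA; have := measure_ge0 P A.
move: h1 h2; case: (P A) => [r| |] //= h1 h2 _ _.
have y0 : 0 <= 1 - p by rewrite subr_ge0; case/andP: hp.
have y1 : 1 - p < 1 by rewrite ltrBlDl ltrDr; case/andP: hp.
congr (_%:E); apply/eqP; rewrite eq_le; rewrite lee_fin in h1; rewrite h1 andbT.
rewrite leNgt; apply/negP => hlt.
have [L hL] : exists L : nat, (1 - p) ^+ L < r - (1 - (1 - p) ^+ K).
  by apply: small_pow; [rewrite y0 y1 | rewrite subr_gt0].
have := h2 L; rewrite -EFinB lee_fin => h.
have : (1 - p) ^+ (K + L) <= (1 - p) ^+ L.
  rewrite exprD ler_piMl ?exprn_ge0 //; exact: exprn_ile1 y0 (ltW y1).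
move: hL h; lra.
Qed.
End Geom.

Lemma max_ge0 (R : realType) n (f : 'I_n -> R) : 0 <= \big[Num.max/0]_(i < n) f i.
Proof.
by elim/big_rec: _ => // i x _ hx; rewrite le_max hx orbT.
Qed.

Lemma max_leP (R : realType) n (f : 'I_n -> R) z : 0 <= z ->
  (\big[Num.max/0]_(i < n) f i <= z) <-> (forall i, f i <= z).
Proof.
move=> z0; elim: n f => [|n IH] f.
  by rewrite big_ord0; split => // _ [].
rewrite big_ord_recl ge_max; split.
  move=> /andP[h0 /IH h] i; case: (unliftP ord0 i) => [j ->|->] //.
move=> h; rewrite h /=; apply/IH => i; exact: h.
Qed.

Theorem mainTheorem1 (R : realType) (n : nat) (hn : (0 < n)%N)
  (ptot : R) (hp0 : 0 < ptot) (hp1 : ptot <= 1)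
  (d1 : measure_display) (T1 : measurableType d1) (P1 : probability T1 R)
  (X : 'I_n -> {RV P1 >-> R}) (p : 'I_n -> R)
  (hp : forall i, 0 < p i <= 1) (hprod : \prod_(i < n) p i = ptot)
  (hindX : mutually_independent X) (hgeomX : forall i, is_geom (X i) (p i))
  (d2 : measure_display) (T2 : measurableType d2) (P2 : probability T2 R)
  (Y : 'I_n -> {RV P2 >-> R})
  (hindY : mutually_independent Y)
  (hgeomY : forall i, is_geom (Y i) (ptot `^ (n%:R)^-1)) :
  forall z : R,
    (P2 [set w | (z < max_rv (fun i => (Y i : T2 -> R)) w)%R]
     <= P1 [set w | (z < max_rv (fun i => (X i : T1 -> R)) w)%R])%E.
Proof.
move=> z.
set q := ptot `^ (n%:R)^-1.
have q0 : 0 < q by apply: powR_gt0.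
have qn : q ^+ n = ptot.
  rewrite -powR_mulrn ?ltW // -powRrM mulVf ?powRr1 ?ltW //.
  by rewrite pnatr_eq0 -lt0n.
have q1 : q <= 1.
  rewrite leNgt; apply/negP => hq.
  have := expr_gt1 hn (ltW q0); rewrite hq qn => /(le_lt_trans hp1).
  by rewrite ltxx.
have [z0|zneg] := leP 0 z; last first.
  have hT (d : measure_display) (T : measurableType d) (Z : 'I_n -> T -> R) :
      [set w | z < max_rv Z w] = setT.
    by apply/seteqP; split => // w _ /=; rewrite /max_rv; apply: (lt_le_trans zneg); exact: max_ge0.
  by rewrite !hT !probability_setT.
have hC (d : measure_display) (T : measurableType d) (P : probability T R)
    (Z : 'I_n -> {RV P >-> R}) :
    [set w | z < max_rv (fun i => (Z i : T -> R)) w] =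
    ~` \bigcap_(i in [set: 'I_n]) (Z i @^-1` `]-oo, z]).
  apply/seteqP; split => w /=.
    move=> hlt hI; move: hlt; rewrite ltNge => /negP; apply.
    apply/max_leP => // i; have := hI i I; by rewrite /preimage /= in_itv /=.
  move=> hn'; rewrite ltNge; apply/negP => /max_leP -/(_ z0) h; apply: hn' => i _.
  by rewrite /preimage /= in_itv /= h.
have mI (d : measure_display) (T : measurableType d) (P : probability T R)
    (Z : 'I_n -> {RV P >-> R}) :
    measurable (\bigcap_(i in [set: 'I_n]) (Z i @^-1` `]-oo, z])).
  apply: fin_bigcap_measurable; first exact: finite_finset.
  by move=> i _; apply: measurable_funPTI; exact: measurable_itv.
rewrite !hC !probability_setC; try exact: mI.
rewrite hindX; last by move=> i; exact: measurable_itv.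
rewrite hindY; last by move=> i; exact: measurable_itv.
have hq : 0 < q <= 1 by rewrite q0 q1.
rewrite (eq_bigr (fun i => (Fm (Num.truncn z) q)%:E)); last first.
  by move=> i _; exact: (@geom_cdf _ _ _ _ _ _ hq (hgeomY i) z).
have hXp : (\prod_(i < n) P1 (X i @^-1` `]-oo, z]) = \prod_(i < n) (Fm (Num.truncn z) (p i))%:E)%E.
  by apply: eq_bigr => i _; exact: (@geom_cdf _ _ _ _ _ _ (hp i) (hgeomX i) z).
rewrite hXp.
rewrite !prodEFin -!EFinB lee_fin lerD2l lerN2 prodr_const card_ord.
apply: prod_ineq => //.
by rewrite hprod qn.
Qed.
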